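(* Consider the $l$-th cycle of RPF-SFISTA, with $\mu=\mu_{l-1}$. For every iteration index $j\ge1$ generated during this cycle: (a) $L_{j-1}\le L_j$ (the sequence $\{L_j\}$ is nondecreasing); (b) $\tau_{j-1}=1+\frac{\mu A_{j-1}}{2}$, $\frac{\tau_{j-1}A_j}{a_{j-1}^2}=L_j$, $\underline M_l\le L_{j-1}\le\max\{\underline M_l,\kappa\bar L\}$, $v_j\in\nabla f(y_j)+\partial h(y_j)$, and $\|v_j\|\le\zeta_l\|y_j-\tilde x_{j-1}\|$; (c) $A_jL_j\ge\max\left\{\frac{j^2}{4},\ (1+Q_l^{-1})^{2(j-1)}\right\}$.
   Context: Setup. Let $f:\mathbb R^n\to\mathbb R$ be convex and differentiable with $\|\nabla f(z')-\nabla f(z)\|\le\bar L\|z'-z\|$ for all $z,z'\in\mathbb R^n$ (some $\bar L\ge0$). Let $h:\mathbb R^n\to(-\infty,\infty]$ be proper, lower semicontinuous and convex with domain $\mathcal H$. Let $\phi:=f+h$ be $\bar\mu$-strongly convex for some $\bar\mu>0$, with (unique) minimizer $z^*$. Write $\ell_f(u;x):=f(x)+\langle\nabla f(x),u-x\rangle$. Define $\kappa:=2\beta/(1-\chi)$. RPF-SFISTA. Parameters $\chi\in(0,1)$, $\beta>1$; inputs $\mu_0>0$, $\bar M_0>0$, $z_0\in\mathcal H$, $\hat\epsilon>0$. The method runs in cycles $l=1,2,\dots$. At the start of cycle $l$: choose $\underline M_l\in[\max\{\bar M_{l-1}/4,\bar M_0\},\bar M_{l-1}]$ (so $\underline M_1=\bar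 M_0$), set $\mu:=\mu_{l-1}$, $x_0:=z_{l-1}$, $\xi_0:=y_0:=x_0$, $A_0:=0$, $\tau_0:=1$, $L_0:=\underline M_l$. Then for $j=1,2,\dots$: (i) set $L_j:=L_{j-1}$; (ii) compute $a_{j-1}=\frac{\tau_{j-1}+\sqrt{\tau_{j-1}^2+4\tau_{j-1}A_{j-1}L_j}}{2L_j}$, $\tilde x_{j-1}=\frac{A_{j-1}y_{j-1}+a_{j-1}x_{j-1}}{A_{j-1}+a_{j-1}}$, $y_j=\arg\min_{u}\{\ell_f(u;\tilde x_{j-1})+h(u)+\frac{L_j}{2}\|u-\tilde x_{j-1}\|^2\}$; if $f(y_j)\le\ell_f(y_j;\tilde x_{j-1})+\frac{(1-\chi)L_j}{4}\|y_j-\tilde x_{j-1}\|^2$ go to (iii), otherwise replace $L_j$ by $\beta L_j$ and repeat (ii); (iii) set $\xi_j:=y_j$ if $\phi(y_j)\le\phi(\xi_{j-1})$ and $\xi_j:=\xi_{j-1}$ otherwise; $A_j:=A_{j-1}+a_{j-1}$; $\tau_j:=\tau_{j-1}+a_{j-1}\mu/2$; $s_j:=L_j(\tilde x_{j-1}-y_j)$; $x_j:=\tau_j^{-1}[\mu a_{j-1}y_j/2+\tau_{j-1}x_{j-1}-a_{j-1}s_j]$; $v_j:=\nabla f(y_j)-\nabla f(\tilde x_{j-1})+s_j$; (iv) if $\|\xi_j-x_0\|^2<\chi A_jL_j\|y_j-\tilde x_{j-1}\|^2$, the cycle ends with a restart: set $z_l:=\xi_j$, $\bar M_l:=L_j$,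 $\mu_l:=\mu/2$ and start cycle $l+1$; (v) otherwise, if $\|v_j\|\le\hat\epsilon$, stop and output $(y,v,\xi,L):=(y_j,v_j,\xi_j,L_j)$; else go to iteration $j+1$. Cycle quantities: $\zeta_l:=\bar L+\max\{\underline M_l,\kappa\bar L\}$ and $Q_l:=2\sqrt2\sqrt{\max\{\underline M_l,\kappa\bar L\}/\mu_{l-1}}$. *)

(* Defs.v *)
(* R : realType, vectors of R^n are row vectors 'rV[R]_n,
   with the EUCLIDEAN inner product and norm defined below (the default
   mathcomp-analysis norm on matrices is the sup norm, so we do not use it). *)
From HB Require Import structures.
From mathcomp Require Import all_boot all_order all_algebra.
From mathcomp Require Import all_classical all_reals.
From mathcomp Require Import ereal.
Set Implicit Arguments.
Unset Strict Implicit.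
Unset Printing Implicit Defensive.
Import Order.TTheory GRing.Theory Num.Theory.
Local Open Scope ring_scope.

Section Defs.
Variables (R : realType) (n : nat).
Notation vec := 'rV[R]_n.

Definition dotv (u v : vec) : R := \sum_(i < n) u 0 i * v 0 i.
Definition normv (u : vec) : R := Num.sqrt (dotv u u).

Definition convex_fun (f : vec -> R) : Prop :=
  forall (x y : vec) (t : R), 0 <= t <= 1 ->
    f (t *: x + (1 - t) *: y) <= t * f x + (1 - t) * f y.

Definition has_gradient (f : vec -> R) (gradf : vec -> vec) : Prop :=
  forall x : vec, forall eps : R, 0 < eps -> exists2 delta : R, 0 < delta &
    forall d : vec, normv d < delta ->
      `|f (x + d) - f x - dotv (gradf x) d| <= eps * normv d.

Definition lipschitz_grad (gradf : vec -> vec) (Lbar : R) : Prop :=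
  forall z z' : vec, normv (gradf z' - gradf z) <= Lbar * normv (z' - z).

Definition proper_fun (h : vec -> \bar R) : Prop :=
  (exists x, (h x < +oo)%E) /\ (forall x, h x != -oo%E).

Definition lsc_fun (h : vec -> \bar R) : Prop :=
  forall (x : vec) (a : R), (a%:E < h x)%E ->
    exists2 delta : R, 0 < delta &
      forall y : vec, normv (y - x) < delta -> (a%:E < h y)%E.

Definition convex_efun (h : vec -> \bar R) : Prop :=
  forall (x y : vec) (t : R), 0 <= t <= 1 ->
    (h (t *: x + (1 - t) *: y)%R <= t%:E * h x + (1 - t)%R%:E * h y)%E.

Definition strongly_convex_efun (phi : vec -> \bar R) (mu : R) : Prop :=
  forall (x y : vec) (t : R), 0 <= t <= 1 ->
    (phi (t *: x + (1 - t) *: y)%R <=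
       t%:E * phi x + (1 - t)%R%:E * phi y
       - (mu / 2 * t * (1 - t) * normv (x - y) ^+ 2)%:E)%E.

Definition edom (h : vec -> \bar R) : set vec := [set x | (h x < +oo)%E].

Definition subdiff (h : vec -> \bar R) (y : vec) : set vec :=
  [set w | (h y < +oo)%E /\
           forall u : vec, (h y + (dotv w (u - y)%R)%:E <= h u)%E].

Definition linf (f : vec -> R) (gradf : vec -> vec) (u x : vec) : R :=
  f x + dotv (gradf x) (u - x).

Definition a_step (tau A L : R) : R :=
  (tau + Num.sqrt (tau ^+ 2 + 4 * tau * A * L)) / (2 * L).

Definition xt_step (A a : R) (y x : vec) : vec :=
  (A + a)^-1 *: (A *: y + a *: x).

Definition is_prox_min (f : vec -> R) (gradf : vec -> vec) (h : vec -> \bar R)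
  (L : R) (xt y : vec) : Prop :=
  forall u : vec,
    ((linf f gradf y xt + L / 2 * normv (y - xt) ^+ 2)%:E + h y <=
     (linf f gradf u xt + L / 2 * normv (u - xt) ^+ 2)%:E + h u)%E.

Definition bt_test (f : vec -> R) (gradf : vec -> vec) (chi L : R) (xt y : vec)
  : Prop :=
  f y <= linf f gradf y xt + (1 - chi) * L / 4 * normv (y - xt) ^+ 2.

(* The sequences are indexed so that
   L j = L_j, A j = A_j, tau j = tau_j, x j = x_j, y j = y_j, xi j = xi_j,
   s j = s_j, v j = v_j, while a j = a_j and xt j = tilde x_j
   (so a_{j-1} = a (j.-1) and tilde x_{j-1} = xt (j.-1)). *)
Definition rpf_cycle (f : vec -> R) (gradf : vec -> vec) (h : vec -> \bar R)
  (chi beta epshat mu Mlow : R) (x0 : vec) (J : nat)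
  (L A tau a : nat -> R) (x y xt xi s v : nat -> vec) : Prop :=
  let phi := fun z => ((f z)%:E + h z)%E in
  [/\ [/\ A 0%N = 0, tau 0%N = 1 & L 0%N = Mlow],
      [/\ x 0%N = x0, y 0%N = x0 & xi 0%N = x0],
      (forall j : nat, (1 <= j <= J)%N ->
        [/\
            (exists K : nat, L j = beta ^+ K * L j.-1 /\
              (forall k : nat, (k < K)%N ->
                 let Lc := beta ^+ k * L j.-1 in
                 let ac := a_step (tau j.-1) (A j.-1) Lc in
                 let xc := xt_step (A j.-1) ac (y j.-1) (x j.-1) in
                 exists2 yc : vec, is_prox_min f gradf h Lc xc yc &
                                   ~ bt_test f gradf chi Lc xc yc)),
            a j.-1 = a_step (tau j.-1) (A j.-1) (L j),
            xt j.-1 = xt_step (A j.-1) (a j.-1) (y j.-1) (x j.-1),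
            is_prox_min f gradf h (L j) (xt j.-1) (y j) &
            bt_test f gradf chi (L j) (xt j.-1) (y j)]
        /\
        [/\
            xi j = (if (phi (y j) <= phi (xi j.-1))%E then y j else xi j.-1),
            A j = A j.-1 + a j.-1 /\ tau j = tau j.-1 + a j.-1 * mu / 2,
            s j = L j *: (xt j.-1 - y j),
            x j = (tau j)^-1 *: (mu * a j.-1 / 2 *: y j + tau j.-1 *: x j.-1
                                 - a j.-1 *: s j) &
            v j = gradf (y j) - gradf (xt j.-1) + s j]) &
      (* (iv)-(v): iterations j < J neither restarted nor stopped *)
      (forall j : nat, (1 <= j < J)%N ->
         ~ (normv (xi j - x0) ^+ 2 < chi * A j * L j * normv (y j - xt j.-1) ^+ 2)
         /\ epshat < normv (v j))].

End Defs.

(* Main.v *)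
Require Import Defs.
From HB Require Import structures.
From mathcomp Require Import all_boot all_order all_algebra.
From mathcomp Require Import all_classical all_reals.
From mathcomp Require Import ereal.
From mathcomp Require Import all_analysis.
From mathcomp Require Import ring lra.
Import Order.TTheory GRing.Theory Num.Theory.
Local Open Scope ring_scope.
Set Implicit Arguments.
Unset Strict Implicit.

Section Vec.
Variables (R : realType) (n : nat).
Notation vec := 'rV[R]_n.
Implicit Types u v w : vec.

Lemma dotvC u v : dotv u v = dotv v u.
Proof. by rewrite /dotv; apply: eq_bigr => i _; rewrite mulrC. Qed.

Lemma dotvDl u v w : dotv (u + v) w = dotv u w + dotv v w.
Proof. by rewrite /dotv -big_split; apply: eq_bigr => i _; rewrite !mxE mulrDl. Qed.

Lemma dotvZl c u v : dotv (c *: u) v = c * dotv u v.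
Proof. by rewrite /dotv mulr_sumr; apply: eq_bigr => i _; rewrite !mxE mulrA. Qed.

Lemma dotvNl u v : dotv (- u) v = - dotv u v.
Proof. by rewrite -scaleN1r dotvZl mulN1r. Qed.

Lemma dotvDr u v w : dotv w (u + v) = dotv w u + dotv w v.
Proof. by rewrite dotvC dotvDl !(dotvC w). Qed.
Lemma dotvZr c u v : dotv v (c *: u) = c * dotv v u.
Proof. by rewrite dotvC dotvZl dotvC. Qed.
Lemma dotvNr u v : dotv v (- u) = - dotv v u.
Proof. by rewrite dotvC dotvNl dotvC. Qed.
Lemma dotvBl u v w : dotv (u - v) w = dotv u w - dotv v w.
Proof. by rewrite dotvDl dotvNl. Qed.
Lemma dotvBr u v w : dotv w (u - v) = dotv w u - dotv w v.
Proof. by rewrite dotvDr dotvNr. Qed.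

Lemma dotv_ge0 u : 0 <= dotv u u.
Proof. by rewrite /dotv; apply: sumr_ge0 => i _; rewrite -expr2 sqr_ge0. Qed.

Lemma normv_ge0 u : 0 <= normv u.
Proof. exact: sqrtr_ge0. Qed.

Lemma normv_sq u : normv u ^+ 2 = dotv u u.
Proof. by rewrite /normv sqr_sqrtr // dotv_ge0. Qed.

Lemma CS_sq u v : dotv u v ^+ 2 <= dotv u u * dotv v v.
Proof.
set a := dotv v v; set b := dotv u v; set c := dotv u u.
have Ha : 0 <= a by apply: dotv_ge0.
have Hc : 0 <= c by apply: dotv_ge0.
have key : forall t, 0 <= c - 2 * t * b + t ^+ 2 * a.
  move=> t; have := dotv_ge0 (u - t *: v).
  rewrite !dotvBl !dotvBr !dotvZl !dotvZr (dotvC v u) -/a -/b -/c.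
  move=> H; nra.
have [a0|a0] := eqVneq a 0.
  have b0 : b = 0.
    apply/eqP; apply/negPn/negP => bn0.
    have := key ((c + 1) / (2 * b)); rewrite a0 mulr0 addr0.
    have -> : 2 * ((c + 1) / (2 * b)) * b = c + 1.
      by field; exact: bn0.
    lra.
  by rewrite b0 a0 expr0n /= mulr0.
have a0' : 0 < a by rewrite lt_def a0 Ha.
have := key (b / a).
have -> : c - 2 * (b / a) * b + (b / a) ^+ 2 * a = (c * a - b ^+ 2) / a.
  by field.
by move/(mulr_ge0 Ha); rewrite mulrCA mulfV // mulr1 subr_ge0.
Qed.


Lemma CS u v : `|dotv u v| <= normv u * normv v.
Proof.
rewrite /normv -sqrtrM ?dotv_ge0 // -sqrtr_sqr.
exact/ler_wsqrtr/CS_sq.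
Qed.

Lemma CS' u v : dotv u v <= normv u * normv v.
Proof. exact: le_trans (ler_norm _) (CS u v). Qed.

Lemma normvZ c u : normv (c *: u) = `|c| * normv u.
Proof.
rewrite /normv dotvZl dotvZr mulrA -expr2 sqrtrM ?sqr_ge0 //.
by rewrite sqrtr_sqr.
Qed.

Lemma normvN u : normv (- u) = normv u.
Proof. by rewrite -scaleN1r normvZ normrN1 mul1r. Qed.

Lemma normvD u v : normv (u + v) <= normv u + normv v.
Proof.
have H : dotv (u + v) (u + v) <= (normv u + normv v) ^+ 2.
  rewrite !dotvDl !dotvDr sqrrD !normv_sq (dotvC v u).
  have := CS' u v; lra.
rewrite {1}/normv; apply: le_trans (ler_wsqrtr H) _.
by rewrite sqrtr_sqr ger0_norm // addr_ge0 // normv_ge0.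
Qed.

Lemma normvB u v : normv (u - v) <= normv u + normv v.
Proof. by rewrite -(normvN v); apply: normvD. Qed.

Lemma normv0 : normv (0 : vec) = 0.
Proof. by rewrite -(scale0r (0:vec)) normvZ normr0 mul0r. Qed.

End Vec.

Import numFieldNormedType.Exports.
Local Open Scope classical_set_scope.
Local Open Scope ring_scope.

Section Desc.
Variables (R : realType) (n : nat).
Notation vec := 'rV[R]_n.

Lemma gderiv (f : vec -> R) gradf : has_gradient f gradf ->
  forall (x d : vec) (t : R),
  is_derive t 1 (fun s => f (x + s *: d)) (dotv (gradf (x + t *: d)) d).
Proof.
move=> Hg x d t.
set g := (fun s => f (x + s *: d)).
set l := dotv (gradf (x + t *: d)) d.
have cv : (fun h : R => h^-1 *: ((g \o shift t) (h *: (1:R)) - g t)) @ (0:R)^' --> (l:R).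
  apply/cvgrPdist_le => e e0.
  have nd0 := normv_ge0 d.
  have [del del0 Hdel] := Hg (x + t *: d) (e / (normv d + 1))
     (divr_gt0 e0 (ltr_wpDl nd0 ltr01)).
  move: (dnbhs_ball (0:R) (divr_gt0 del0 (ltr_wpDl nd0 ltr01))).
  apply: filterS => s [].
  rewrite /ball /= sub0r normrN => Hs /eqP sn0.
  rewrite /g.
  have -> : x + (s%:A + t) *: d = x + t *: d + s *: d.
    by rewrite [_%:A]mulr1 scalerDl addrA (addrAC x).
  have N1 : 0 < normv d + 1 by lra.
  have Hs' : normv (s *: d) < del.
    rewrite normvZ; apply: le_lt_trans (_ : `|s| * (normv d + 1) < del).
      by rewrite ler_pM2l ?normr_gt0 //; lra.
    by rewrite -ltr_pdivlMr.
  have := Hdel _ Hs'; rewrite dotvZr normvZ -/l.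
  set F := f _ - f _.
  have -> : l - s^-1 *: F = - (s^-1 * (F - s * l)).
    have E : s^-1 *: F = s^-1 * F by []. 
    by rewrite E; field.
  rewrite normrN normrM normfV ler_pdivrMl ?normr_gt0 // => H.
  apply: le_trans H _.
  have : normv d / (normv d + 1) <= 1 by rewrite ler_pdivrMr //; lra.
  have := normr_ge0 s.
  have -> : e / (normv d + 1) * (`|s| * normv d) = `|s| * e * (normv d / (normv d + 1)).
    by field; rewrite lt0r_neq0.
  move=> ? ?; rewrite -[X in _ <= X]mulr1; apply: ler_wpM2l => //.
  by apply: mulr_ge0 => //; lra.
have der : derivable g t 1 by apply/cvg_ex; exists l.
apply: DeriveDef => //.
rewrite /derive; exact: cvg_lim cv.
Qed.

Lemma polyd (a b t : R) :
  is_derive t 1 (fun s : R => a * s + b * (s * s)) (a + b * (t + t)).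
Proof.
have H : is_derive t 1 ((a \*: (@id R)) + (b \*: ((@id R) * (@id R)))) (a *: 1 + b *: (id t *: 1 + id t *: 1)).
  apply: is_deriveD; apply: is_deriveZ => //.
have -> : (fun s : R => a * s + b * (s * s)) = ((a \*: (@id R)) + (b \*: ((@id R) * (@id R)))).
  by apply/funext => s.
apply: is_derive_eq H _.
by rewrite /= /GRing.scale /=; ring.
Qed.

Lemma descent (f : vec -> R) gradf Lbar : has_gradient f gradf ->
  lipschitz_grad gradf Lbar -> 0 <= Lbar -> forall x d : vec,
  f (x + d) <= f x + dotv (gradf x) d + Lbar / 2 * normv d ^+ 2.
Proof.
move=> Hg HL L0 x d.
set c0 := dotv (gradf x) d; set N := normv d ^+ 2.
set k := fun s : R => f (x + s *: d) - (c0 * s + (Lbar / 2 * N) * (s * s)).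
have Dk : forall t : R, is_derive t (1:R) k
   (dotv (gradf (x + t *: d)) d - (c0 + (Lbar / 2 * N) * (t + t))).
  move=> t.
  have -> : k = (fun s : R => f (x + s *: d)) - (fun s : R => c0 * s + (Lbar / 2 * N) * (s * s)).
    by apply/funext => s.
  apply: is_deriveB; [exact: gderiv | exact: polyd].
have dk : forall t : R, derivable k t (1:R) by move=> t; case: (Dk t).
have kc : {within `[0, 1], continuous k}.
  by apply: derivable_within_continuous => t _; exact: dk.
have dneg : forall t : R, t \in `]0, 1[ -> (k^`())%classic t <= 0.
move=> t; rewrite in_itv /= => /andP[t0 t1].
rewrite derive1E derive_val.
have H1 := CS' (gradf (x + t *: d) - gradf x) d.
have H2 := HL x (x + t *: d).
have E : x + t *: d - x = t *: d by rewrite addrC addKr.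
rewrite E normvZ (gtr0_norm t0) in H2.
rewrite dotvBl -/c0 in H1.
have H3 : normv (gradf (x + t *: d) - gradf x) * normv d <= Lbar * (t * normv d) * normv d.
  apply: ler_wpM2r; [exact: normv_ge0|exact: H2].
have : Lbar * (t * normv d) * normv d = Lbar * t * N by rewrite /N; ring.
lra.
have := @ler0_derive1_le_cc R k 0 1 (fun t _ => dk t) dneg kc 1 0.
rewrite !in_itv /= => H.
have : k 1 <= k 0 by apply: H => //; rewrite ?lexx ?ler01 //.
rewrite /k scale1r scale0r addr0 !mulr0 !mulr1 addr0 subr0.
by rewrite /N; lra.
Qed.

End Desc.

Section Sub.
Variables (R : realType) (n : nat).
Implicit Types z : \bar R.
Notation vec := 'rV[R]_n.

Lemma fin_of (z : \bar R) : (z < +oo)%E -> z != -oo%E -> exists r, z = r%:E.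
Proof. by case: z => // r _ _; exists r. Qed.

Lemma gap_lemma (a b K L : R) : 0 <= K -> 0 <= L ->
  (forall t, 0 < t <= 1 -> a <= b + L / 2 * t * K) -> a <= b.
Proof.
move=> K0 L0 H; rewrite leNgt; apply/negP => ab.
set g := a - b.
have g0 : 0 < g by rewrite /g subr_gt0.
have den : 0 < g + L * K by have := mulr_ge0 L0 K0; lra.
have t0 : 0 < g / (g + L * K) by apply: divr_gt0.
have t1 : g / (g + L * K) <= 1 by rewrite ler_pdivrMr // mul1r; have := mulr_ge0 L0 K0; lra.
have := H (g / (g + L * K)); rewrite t0 t1 => /(_ isT).
have -> : L / 2 * (g / (g + L * K)) * K = g * (L * K / (2 * (g + L * K))).
  by field; rewrite lt0r_neq0.
have : L * K / (2 * (g + L * K)) < 1.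
  rewrite ltr_pdivrMr ?mul1r; last by lra.
  have := mulr_ge0 L0 K0; lra.
rewrite /g => H1 H2.
have : (a - b) * (L * K / (2 * (a - b + L * K))) < (a - b) * 1.
  by rewrite ltr_pM2l.
lra.
Qed.

Lemma prox_subgrad (f : vec -> R) gradf h (L : R) (xt y : vec) :
  proper_fun h -> convex_efun h -> 0 <= L -> is_prox_min f gradf h L xt y ->
  subdiff h y (L *: (xt - y) - gradf xt).
Proof.
move=> [[x1 hx1] hnoo] hconv L0 Hp.
set P := fun u => linf f gradf u xt + L / 2 * normv (u - xt) ^+ 2.
have Hp' : forall u, ((P y)%:E + h y <= (P u)%:E + h u)%E := Hp.
have [hy Ehy] : exists r, h y = r%:E.
  apply: fin_of (hnoo y).
  have [r1 E1] := @fin_of (h x1) hx1 (hnoo x1).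
  have := Hp' x1; rewrite E1.
  case: (h y) => [r| |] //; first by rewrite ltry.
split; first by rewrite Ehy ltry.
move=> u.
case Hu: (h u) => [r| |]; last by have := hnoo u; rewrite Hu.
  2: by rewrite leey.
rewrite Ehy -EFinD lee_fin.
set D := u - y; set Y := y - xt.
apply: (@gap_lemma _ _ (normv D ^+ 2) L); [exact: sqr_ge0 | exact: L0 |].
move=> t /andP[t0 t1].
have t01 : 0 <= t <= 1 by rewrite t1 ltW.
have Ht := hconv u y t t01.
have eut : t *: u + (1 - t) *: y = y + t *: D.
  by rewrite /D scalerBl scale1r scalerBr addrCA.
rewrite eut Hu Ehy -!EFinM -EFinD in Ht.
have [hut Ehut] := @fin_of (h (y + t *: D)) (le_lt_trans Ht (ltry _)) (hnoo _).
rewrite Ehut lee_fin in Ht.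
have := Hp' (y + t *: D); rewrite Ehut Ehy -!EFinD lee_fin /P /linf.
have -> : y + t *: D - xt = Y + t *: D by rewrite /Y addrAC.
have -> : L *: (xt - y) - gradf xt = - (L *: Y) - gradf xt by rewrite /Y -scalerN opprB.
rewrite -/Y; clearbody Y D.
rewrite !normv_sq !dotvDl !dotvDr !dotvZl !dotvZr (dotvC Y D).
rewrite !dotvNl dotvZl (dotvC Y D) => Hm.
set gD := dotv (gradf xt) D in Hm *.
set YD := dotv D Y in Hm *.
set DD := dotv D D in Hm *.
have DD0 : 0 <= DD by apply: dotv_ge0.
have key : t * (hy + (- (L * YD) - gD) - (r + L / 2 * t * DD)) <= 0.
  nra.
by move: key; rewrite pmulr_rle0 // subr_le0.
Qed.

End Sub.

Lemma rej_bound (R : realType) (n : nat) (f : 'rV[R]_n -> R) gradf Lbar chi Lc xc yc :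
  has_gradient f gradf -> lipschitz_grad gradf Lbar -> 0 <= Lbar ->
  ~ bt_test f gradf chi Lc xc yc -> (1 - chi) * Lc < 2 * Lbar.
Proof.
move=> Hg HL L0 Hn.
have D := descent Hg HL L0 xc (yc - xc).
rewrite addrCA subrr addr0 in D.
have Hlt : linf f gradf yc xc + (1 - chi) * Lc / 4 * normv (yc - xc) ^+ 2 < f yc.
  by rewrite ltNge; apply/negP.
rewrite /linf in Hlt.
have N0 := sqr_ge0 (normv (yc - xc)).
set N := normv (yc - xc) ^+ 2 in N0 D Hlt.
rewrite ltNge; apply/negP => H.
have : Lbar / 2 * N <= (1 - chi) * Lc / 4 * N.
  rewrite ler_wpM2r //; lra.
lra.
Qed.

Lemma a_eq (R : realType) (tau A L : R) : 0 < tau -> 0 <= A -> 0 < L ->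
  0 < a_step tau A L /\ L * a_step tau A L ^+ 2 = tau * (A + a_step tau A L).
Proof.
move=> t0 A0 L0.
rewrite /a_step.
set S := Num.sqrt _.
have S0 : 0 <= S by apply: sqrtr_ge0.
have HS : S ^+ 2 = tau ^+ 2 + 4 * tau * A * L.
  by rewrite sqr_sqrtr //; apply: addr_ge0; [exact: sqr_ge0| rewrite !mulr_ge0 //; lra].
split; first by apply: divr_gt0; lra.
apply/eqP; rewrite -subr_eq0.
have -> : L * ((tau + S) / (2 * L)) ^+ 2 - tau * (A + (tau + S) / (2 * L))
  = (S ^+ 2 - (tau ^+ 2 + 4 * tau * A * L)) / (4 * L).
  by field; rewrite lt0r_neq0.
by rewrite HS subrr mul0r.
Qed.

Lemma quad_step (R : realType) (a A q : R) : 0 <= a -> 0 <= A -> 0 <= q ->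
  4 * q ^+ 2 * A * (A + a) <= a ^+ 2 -> 2 * q * (1 + q) * A <= a.
Proof.
move=> a0 A0 q0 H.
rewrite leNgt; apply/negP => Hc.
have qA0 : 0 <= q * A by apply: mulr_ge0.
case: (lerP (a - 4 * q ^+ 2 * A) 0) => Hs.
  have : a * (a - 4 * q ^+ 2 * A) <= 0 by apply: mulr_ge0_le0.
  move=> H2.
  have qA : q * A = 0.
    apply/eqP; rewrite eq_le qA0 andbT -(@ler_pXn2r _ 2) ?nnegrE //.
    rewrite expr0n /= exprMn; nra.
  have : 2 * q * (1 + q) * A = 0 by rewrite -mulrA (mulrC (1+q)) mulrA -(mulrA 2) qA; ring.
  lra.
have h1 : a * (a - 4 * q ^+ 2 * A) < 2 * q * (1 + q) * A * (a - 4 * q ^+ 2 * A).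
  by rewrite ltr_pM2r.
have h2 : a - 4 * q ^+ 2 * A < 2 * q * A * (1 - q).
  have : 2 * q * (1 + q) * A - 4 * q ^+ 2 * A = 2 * q * A * (1 - q) by ring.
  lra.
have h3 : 2 * q * (1 + q) * A * (a - 4 * q ^+ 2 * A) <= 2 * q * (1 + q) * A * (2 * q * A * (1 - q)).
  apply: ler_wpM2l; last exact: ltW.
  by rewrite !mulr_ge0 //; lra.
have : 2 * q * (1 + q) * A * (2 * q * A * (1 - q)) = 4 * q ^+ 2 * A ^+ 2 * (1 - q ^+ 2) by ring.
have : 0 <= 4 * q ^+ 2 * A ^+ 2 * q ^+ 2 by rewrite !mulr_ge0 // ?sqr_ge0 //.
move=> h4 h5.
have : a * (a - 4 * q ^+ 2 * A) = a ^+ 2 - 4 * q ^+ 2 * A * a by ring.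
have : 4 * q ^+ 2 * A * (A + a) = 4 * q ^+ 2 * A ^+ 2 + 4 * q ^+ 2 * A * a by ring.
lra.
Qed.

Lemma sq_step (R : realType) (N P m : R) : 0 < m -> m ^+ 2 <= P ->
  0 <= N - P -> N <= (N - P) ^+ 2 -> (m + 1 / 2) ^+ 2 <= N.
Proof.
move=> m0 HP H1 H2.
have N0 : 0 <= N by have := sqr_ge0 m; lra.
have m2 : 0 < m ^+ 2 by rewrite exprn_gt0.
set r := Num.sqrt N.
have r0 : 0 <= r by apply: sqrtr_ge0.
have rN : r ^+ 2 = N by rewrite sqr_sqrtr.
have rNP : r <= N - P.
  by rewrite -(@ler_pXn2r _ 2) ?nnegrE // rN.
rewrite -rN ler_pXn2r ?nnegrE //; last by lra.
rewrite leNgt; apply/negP => Hr.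
have H3 : r ^+ 2 - r >= m ^+ 2 by lra.
case: (lerP (1 / 2) r) => Hr2; last by nra.
have H4 : (r - 1 / 2) * (r - 1 / 2) <= (r - 1 / 2) * m.
  by apply: ler_wpM2l; lra.
have H5 : (r - 1 / 2) * m <= m * m by apply: ler_wpM2r; lra.
have : (r - 1 / 2) * (r - 1 / 2) = r ^+ 2 - r + 1 / 4 by field.
have : m * m = m ^+ 2 by ring.
lra.
Qed.

Unset Implicit Arguments.
Close Scope classical_set_scope.
Local Open Scope ring_scope.

Theorem lemma2p3 (R : realType) (n : nat)
  (f : 'rV[R]_n -> R) (gradf : 'rV[R]_n -> 'rV[R]_n) (h : 'rV[R]_n -> \bar R)
  (Lbar mubar : R) (zstar : 'rV[R]_n)
  (chi beta : R) (barM0 barMprev Mlow mu epshat : R) (x0 : 'rV[R]_n) (J : nat)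
  (L A tau a : nat -> R) (x y xt xi s v : nat -> 'rV[R]_n) :
  (* standing assumptions *)
  convex_fun f -> has_gradient f gradf -> 0 <= Lbar -> lipschitz_grad gradf Lbar ->
  proper_fun h -> lsc_fun h -> convex_efun h ->
  0 < mubar -> strongly_convex_efun (fun z => ((f z)%:E + h z)%E) mubar ->
  (forall z, ((f zstar)%:E + h zstar <= (f z)%:E + h z)%E) ->
  (* parameters and inputs of the cycle *)
  0 < chi < 1 -> 1 < beta -> 0 < epshat -> 0 < mu ->
  0 < barM0 -> Num.max (barMprev / 4) barM0 <= Mlow <= barMprev ->
  edom h x0 ->
  rpf_cycle f gradf h chi beta epshat mu Mlow x0 J L A tau a x y xt xi s v ->
  let kappa := 2 * beta / (1 - chi) in
  let zeta := Lbar + Num.max Mlow (kappa * Lbar) in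
  let Q := 2 * Num.sqrt 2 * Num.sqrt (Num.max Mlow (kappa * Lbar) / mu) in
  forall j : nat, (1 <= j <= J)%N ->
    [/\ (* (a) *) L j.-1 <= L j,
        (* (b) *)
        [/\ tau j.-1 = 1 + mu * A j.-1 / 2,
            tau j.-1 * A j / a j.-1 ^+ 2 = L j,
            Mlow <= L j.-1 <= Num.max Mlow (kappa * Lbar),
            (exists2 w, subdiff h (y j) w & v j = gradf (y j) + w) &
            normv (v j) <= zeta * normv (y j - xt j.-1)] &
        (* (c) *)
        Num.max ((j%:R) ^+ 2 / 4) ((1 + Q^-1) ^+ (2 * j.-1)) <= A j * L j].
Proof.
move=> fconv Hg Lb0 HLip hprop hlsc hconv mub0 hsc hmin /andP[chi0 chi1] beta1
  eps0 mu0 M00 /andP[HMl1 HMl2] hx0 Hcyc kappa zeta Q.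
have Ml0 : 0 < Mlow.
  by move: HMl1; rewrite ge_max => /andP[_ ?]; lra.
case: Hcyc => -[A0 tau0 L0e] _ Hit _.
set M := Num.max Mlow (kappa * Lbar) in zeta Q *.
have MlM : Mlow <= M by rewrite le_max lexx.
have kLM : kappa * Lbar <= M by rewrite le_max lexx orbT.
have M0 : 0 < M by lra.
have step : forall i, (i < J)%N -> 0 < L i -> 0 < tau i -> 0 <= A i ->
   [/\ L i <= L i.+1, L i.+1 <= Num.max (L i) (kappa * Lbar),
       0 < a i, L i.+1 * a i ^+ 2 = tau i * (A i + a i) &
       A i.+1 = A i + a i /\ tau i.+1 = tau i + a i * mu / 2].
  move=> i iJ Li0 ti0 Ai0.
  have : (1 <= i.+1 <= J)%N by rewrite iJ.
  move/Hit => /= -[[[K [EL Hrej]] Ea Ext Hprox Hbt] [Exi [EA Etau] Es Ex Ev]].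
  have LL : L i <= L i.+1.
    by rewrite EL ler_peMl ?(ltW Li0) // exprn_ege1 // ltW.
  have Li1 : 0 < L i.+1 by lra.
  have [ai0 Hai] := a_eq ti0 Ai0 Li1.
  rewrite -Ea in ai0 Hai.
  split => //.
  case: K EL Hrej => [|k] EL Hrej.
    by rewrite EL expr0 mul1r le_max lexx.
  have [yc _ Hnbt] := Hrej k (ltnSn k).
  have Hb := rej_bound Hg HLip Lb0 Hnbt.
  rewrite le_max; apply/orP; right.
  rewrite EL exprS -mulrA /kappa.
  set Lc := beta ^+ k * L i in Hb *.
  have -> : 2 * beta / (1 - chi) * Lbar = beta * (2 * Lbar / (1 - chi)).
    by field; rewrite subr_eq0 gt_eqF.
  rewrite ler_pM2l; last lra.
  by rewrite ler_pdivlMr; [lra| lra].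
have inv : forall i, (i <= J)%N ->
    [/\ Mlow <= L i, L i <= M, tau i = 1 + mu * A i / 2 & 0 <= A i].
  elim=> [_|i IH iJ].
    by rewrite A0 tau0 L0e; split => //; rewrite mulr0 mul0r addr0.
  have [H1 H2 H3 H4] := IH (ltnW iJ).
  have Li0 : 0 < L i by lra.
  have ti0 : 0 < tau i.
    rewrite H3; have := mulr_ge0 (ltW mu0) H4; lra.
  have [LL LU ai0 Hai [EA Etau]] := step i iJ Li0 ti0 H4.
  split.
  - exact: le_trans H1 LL.
  - by apply: le_trans LU _; rewrite ge_max H2 kLM.
  - by rewrite Etau H3 EA; ring.
  - by rewrite EA; lra.
have stepI : forall i, (i < J)%N ->
   [/\ L i <= L i.+1, 0 < a i, L i.+1 * a i ^+ 2 = tau i * (A i + a i),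
       A i.+1 = A i + a i & tau i = 1 + mu * A i / 2 /\ 0 <= A i].
  move=> i iJ.
  have [H1 H2 H3 H4] := inv i (ltnW iJ).
  have Li0 : 0 < L i by lra.
  have ti0 : 0 < tau i.
    rewrite H3; have := mulr_ge0 (ltW mu0) H4; lra.
  have [LL LU ai0 Hai [EA Etau]] := step i iJ Li0 ti0 H4.
  by split.
have Q0 : 0 < Q.
  rewrite /Q !mulr_gt0 // sqrtr_gt0 //; exact: divr_gt0.
set q := Q^-1.
have q0 : 0 < q by rewrite /q invr_gt0.
have hq : 4 * q ^+ 2 = mu / (2 * M).
  rewrite /q exprVn /Q !exprMn !sqr_sqrtr //; last exact: ltW (divr_gt0 M0 mu0).
  by field; rewrite ?lt0r_neq0.
have C : forall i, (i < J)%N ->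
    (i.+1%:R ^+ 2 / 4 <= A i.+1 * L i.+1) /\ ((1 + q) ^+ (2 * i) <= A i.+1 * L i.+1).
  elim=> [iJ|i IH iJ].
    have [LL ai0 Hai EA [Et HA]] := stepI 0%N iJ.
    rewrite tau0 A0 add0r mul1r in Hai.
    have E1 : L 1%N * a 0%N = 1.
      by apply: (mulIf (lt0r_neq0 ai0)); rewrite mul1r -mulrA -expr2 Hai.
    rewrite EA A0 add0r (mulrC (a 0%N)) E1 muln0 expr0; split; last exact: lexx.
    by rewrite expr1n; lra.
  have [P1 P2] := IH (ltnW iJ).
  have [LL ai0 Hai EA [Et HA]] := stepI i.+1 iJ.
  have [_ L2M _ _] := inv i.+2 iJ.
  have [Ml1 _ _ _] := inv i.+1 (ltnW iJ).
  set A' := A i.+1 in P1 P2 Hai EA Et HA *.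
  set L1 := L i.+1 in P1 P2 LL Ml1 *.
  set L2 := L i.+2 in LL Hai L2M *.
  set aa := a i.+1 in ai0 Hai EA *.
  set t := tau i.+1 in Hai Et *.
  have L1p : 0 < L1 by lra.
  have L2p : 0 < L2 by lra.
  have PP : A' * L1 <= A' * L2 by rewrite ler_wpM2l.
  rewrite EA; split.
  - set k : R := i.+1%:R.
    have k0 : 0 < k by rewrite /k ltr0n.
    have -> : i.+2%:R = k + 1 :> R by rewrite -[i.+2]addn1 natrD.
    have -> : (k + 1) ^+ 2 / 4 = (k / 2 + 1 / 2) ^+ 2 by field.
    apply: (@sq_step _ _ (A' * L2)).
    + by apply: divr_gt0.
    + have -> : (k / 2) ^+ 2 = k ^+ 2 / 4 by field.
      lra.
    + have -> : (A' + aa) * L2 - A' * L2 = aa * L2 by ring.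
      by apply: mulr_ge0; lra.
    + have -> : (A' + aa) * L2 - A' * L2 = aa * L2 by ring.
      have -> : (aa * L2) ^+ 2 = t * ((A' + aa) * L2).
        have -> : (aa * L2) ^+ 2 = L2 * (L2 * aa ^+ 2) by ring.
        by rewrite Hai; ring.
      have N0 : 0 <= (A' + aa) * L2 by apply: mulr_ge0; lra.
      rewrite -[X in X <= _]mul1r ler_wpM2r //.
      by rewrite Et; have := mulr_ge0 (ltW mu0) HA; lra.
  - have X0 : 0 <= mu * A' * (A' + aa) / 2.
      by apply: mulr_ge0 => //; apply: mulr_ge0; [apply: mulr_ge0; lra| lra].
    have Hq : 4 * q ^+ 2 * A' * (A' + aa) <= aa ^+ 2.
      have -> : 4 * q ^+ 2 * A' * (A' + aa) = (mu * A' * (A' + aa) / 2) / M.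
        by rewrite hq; field; rewrite lt0r_neq0.
      apply: le_trans (_ : (mu * A' * (A' + aa) / 2) / L2 <= _).
        by apply: ler_wpM2l => //; rewrite lef_pV2 ?posrE.
      rewrite ler_pdivrMr // (mulrC (aa ^+ 2)) Hai Et.
      have : 0 <= A' + aa by lra.
      nra.
    have Ha := quad_step (ltW ai0) HA (ltW q0) Hq.
    have HA2 : (1 + q) ^+ 2 * A' <= A' + aa.
      have : 0 <= q ^+ 2 * A' by rewrite mulr_ge0 // sqr_ge0.
      have : (1 + q) ^+ 2 * A' = A' + 2 * q * (1 + q) * A' - q ^+ 2 * A' by ring.
      lra.
    rewrite mulnS exprD.
    have H1q : 0 <= (1 + q) ^+ 2 by apply: sqr_ge0.
    apply: le_trans (_ : (1 + q) ^+ 2 * (A' * L1) <= _).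
      by rewrite ler_wpM2l.
    apply: le_trans (_ : (1 + q) ^+ 2 * (A' * L2) <= _).
      by rewrite ler_wpM2l.
    by rewrite mulrA ler_wpM2r //; lra.
move=> j /andP[].
case: j => [//|i] _ iJ /=.
have [LL ai0 Hai EA [Et HA]] := stepI i iJ.
have [Ml1 LM1 _ _] := inv i (ltnW iJ).
have [_ LM2 _ _] := inv i.+1 iJ.
have : (1 <= i.+1 <= J)%N by rewrite iJ.
move/Hit => /= -[[_ _ _ Hprox _] [_ _ Es _ Ev]].
have [C1 C2] := C i iJ.
split => //.
  split => //.
  - rewrite EA -Hai; field; exact: lt0r_neq0.
  - by rewrite Ml1 LM1.
  - exists (L i.+1 *: (xt i - y i.+1) - gradf (xt i)).
      by apply: prox_subgrad hprop hconv _ Hprox; lra.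
    by rewrite Ev Es addrA addrAC.
  - rewrite Ev Es.
    apply: le_trans (normvD _ _) _.
    rewrite normvZ ger0_norm; last by lra.
    have -> : xt i - y i.+1 = - (y i.+1 - xt i) by rewrite opprB.
    rewrite normvN.
    have H1 := HLip (xt i) (y i.+1).
    have n0 := normv_ge0 (y i.+1 - xt i).
    have : L i.+1 * normv (y i.+1 - xt i) <= M * normv (y i.+1 - xt i).
      by apply: ler_wpM2r.
    rewrite /zeta mulrDl; lra.
by rewrite ge_max C1 C2.
Qed.
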